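(* Let $A \in \mathbb{C}^{n \times n}$, and fix $A^-\in A\{1\}$ and $A^{GD}\in A\{GD\}$. For $X\in\mathbb{C}^{n\times n}$ the following are equivalent: (i) $X = A^{GD}AA^{-}$; (ii) $AX = AA^{-}$ and $R(X)=R(A^{GD}A)$; (iii) $A^{-}AX = A^{-}AA^{-}$ and $R(X)=R(A^{GD}A)$.
   Context: For $A\in\mathbb{C}^{n\times n}$, $ind(A)$ is the smallest nonnegative integer $k$ with $\mathrm{rank}(A^k)=\mathrm{rank}(A^{k+1})$. $A\{1\}$ is the set of matrices $X$ with $AXA=A$. With $k=ind(A)$, $A\{GD\}$ is the set of G-Drazin inverses of $A$: matrices $X$ with $AXA=A$, $XA^{k+1}=A^k$, $A^{k+1}X=A^k$. $R(\cdot)$ denotes range (column space). The matrix $A^{GD}AA^-$ is called the GD1 inverse of $A$ associated with $A^-$ and $A^{GD}$. *)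

(* Defs.v *)
From HB Require Import structures.
From mathcomp Require Import all_boot all_order all_algebra.
From mathcomp Require Import complex.
From mathcomp Require Import Rstruct.
Set Implicit Arguments. Unset Strict Implicit. Unset Printing Implicit Defensive.
Import GRing.Theory Num.Theory.
Local Open Scope ring_scope.

Notation C := (complex Rdefinitions.R).

(* ind(A): smallest k >= 0 with rank(A^k) = rank(A^(k+1)).  Such k exists and
   is <= n, so searching in [0, n] finds the minimum. *)
Definition ind (n : nat) (A : 'M[C]_n) : nat :=
  find (fun k => \rank (A ^+ k) == \rank (A ^+ k.+1)) (iota 0 n.+1).

Definition inner_inv (n : nat) (A X : 'M[C]_n) : Prop := A *m X *m A = A.

Definition GD_inv (n : nat) (A X : 'M[C]_n) : Prop :=
  let k := ind A in
  [/\ A *m X *m A = A, X *m A ^+ k.+1 = A ^+ k & A ^+ k.+1 *m X = A ^+ k].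

(* R(X) = R(Y): equality of column spaces (column space of X = row space of X^T) *)
Definition range_eq (m n p : nat) (X : 'M[C]_(m, n)) (Y : 'M[C]_(m, p)) : bool :=
  (X^T == Y^T)%MS.

(* Main.v *)
Require Import Defs.
From mathcomp Require Import all_boot all_algebra complex Rstruct.
Local Open Scope ring_scope.

Lemma E1l (n : nat) (A Am AGD : 'M[C]_n) :
  A *m Am *m A = A -> AGD *m A = AGD *m A *m Am *m A.
Proof.
move=> HM; have -> : AGD *m A *m Am *m A = AGD *m (A *m Am *m A) by rewrite !mulmxA.
by rewrite HM.
Qed.

Lemma key1 (n : nat) (A Am AGD : 'M[C]_n) :
  A *m Am *m A = A -> A *m AGD *m A = A ->
  A *m (AGD *m A *m Am) = A *m Am /\ range_eq (AGD *m A *m Am) (AGD *m A).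
Proof.
move=> HM HG; split; first by rewrite !mulmxA HG.
rewrite /range_eq; apply/andP; split.
  by rewrite trmx_mul submxMl.
rewrite {1}(@E1l _ A Am AGD HM).
by rewrite (trmx_mul (AGD *m A *m Am) A) submxMl.
Qed.

Lemma key2 (n : nat) (A Am AGD X : 'M[C]_n) :
  A *m Am *m A = A -> A *m AGD *m A = A ->
  range_eq X (AGD *m A) -> Am *m A *m X = Am *m A *m Am -> X = AGD *m A *m Am.
Proof.
move=> HM HG /andP [/submxP [D HD] _] H.
have HX : X = AGD *m A *m D^T by rewrite -[X]trmxK HD trmx_mul trmxK.
have E2 : Am *m A *m D^T = Am *m A *m Am.
  rewrite -H HX.
  have -> : Am *m A *m (AGD *m A *m D^T) = Am *m (A *m AGD *m A) *m D^T by rewrite !mulmxA.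
  by rewrite HG.
rewrite HX (@E1l _ A Am AGD HM).
have -> : AGD *m A *m Am *m A *m D^T = AGD *m A *m (Am *m A *m D^T) by rewrite !mulmxA.
rewrite E2.
have -> : AGD *m A *m (Am *m A *m Am) = AGD *m A *m Am *m A *m Am by rewrite !mulmxA.
by rewrite -(@E1l _ A Am AGD HM).
Qed.

Theorem theorem2p5 (n : nat) (A Am AGD X : 'M[C]_n) :
  inner_inv A Am -> GD_inv A AGD ->
  [/\ (X = AGD *m A *m Am <-> (A *m X = A *m Am /\ range_eq X (AGD *m A))),
      (X = AGD *m A *m Am <->
         (Am *m A *m X = Am *m A *m Am /\ range_eq X (AGD *m A)))
    & ((A *m X = A *m Am /\ range_eq X (AGD *m A)) <->
         (Am *m A *m X = Am *m A *m Am /\ range_eq X (AGD *m A)))].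
Proof.
rewrite /inner_inv /GD_inv => HM [HG _ _].
have K1 := @key1 _ A Am AGD HM HG.
have K2 := @key2 _ A Am AGD X HM HG.
have ii_iii : A *m X = A *m Am -> Am *m A *m X = Am *m A *m Am.
  by move=> H; rewrite -!mulmxA H.
split; split.
- by move=> ->; exact: K1.
- by case=> H R; apply: K2 R (ii_iii H).
- move=> ->; case: K1 => H R; split; last exact: R.
  by rewrite -(mulmxA Am A) H mulmxA.
- by case=> H R; apply: K2 R H.
- by case=> H R; split; [apply: ii_iii | exact: R].
- case=> H R; have EX := K2 R H; rewrite EX; exact: K1.
Qed.
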